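(* Let $P_0>0$, $T>0$, $\sigma>0$, $\tau>0$, $w\in\mathbb R$, $P_t=\frac{P_0}{1+P_0t}$, $\alpha(t)=-\frac{(1+P_0t)(T-t)}{1+P_0(2T-t)}$, $\gamma(t)=\frac12\log\!\big(\frac{(1+P_0t)(1+P_0(2T-t))}{(1+P_0T)^2}\big)$, $\eta(t)=\frac{\tau}{2}\int_t^T\alpha(s)ds$, $\zeta(t)=-\int_t^T\big(\frac{\tau}{2}[\log\frac{\pi\tau}{\sigma^2}-\gamma(s)]-P_s^2\eta(s)\big)ds$ ($\pi=3.14159\ldots$). Then $$V(t,x,m)=e^{\alpha(t)m^2+\gamma(t)}(x-w)^2+\eta(t)m^2+\zeta(t)$$ satisfies, for all $t\in[0,T]$, $x,m\in\mathbb R$, $$0=V_t+\frac{P_t^2}{2}V_{mm}-\frac{(mV_x+P_tV_{xm})^2}{2V_{xx}}-\frac{\tau}{2}\log\!\Big(\frac{2\pi\tau}{\sigma^2V_{xx}}\Big),\qquad V(T,x,m)=(x-w)^2.$$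
   Context: This is the reduced HJB equation of entropy-regularized mean–variance control under Bayesian drift uncertainty, written along the deterministic posterior-variance path $P=P_t$ (which satisfies $dP_t/dt=-P_t^2$); $x$ is discounted wealth and $m$ the posterior mean of the unknown Sharpe ratio. *)

(* Defs.v *)
From Stdlib Require Import Reals.
From Coquelicot Require Import Coquelicot.
Open Scope R_scope.

Definition Pt (P0 t : R) : R := P0 / (1 + P0 * t).

Definition alpha (P0 T t : R) : R :=
  - ((1 + P0 * t) * (T - t)) / (1 + P0 * (2 * T - t)).

Definition gamma (P0 T t : R) : R :=
  / 2 * ln (((1 + P0 * t) * (1 + P0 * (2 * T - t))) / (1 + P0 * T) ^ 2).

Definition eta (P0 T tau t : R) : R :=
  tau / 2 * RInt (fun s => alpha P0 T s) t T.

Definition zeta (P0 T sigma tau t : R) : R :=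
  - RInt (fun s => tau / 2 * (ln (PI * tau / sigma ^ 2) - gamma P0 T s)
                   - (Pt P0 s) ^ 2 * eta P0 T tau s) t T.

Definition Vfun (P0 T sigma tau w t x m : R) : R :=
  exp (alpha P0 T t * m ^ 2 + gamma P0 T t) * (x - w) ^ 2
  + eta P0 T tau t * m ^ 2 + zeta P0 T sigma tau t.

(* Main.v *)
Require Import Defs.
From Stdlib Require Import Reals Lra.
From Coquelicot Require Import Coquelicot.
Open Scope R_scope.
Lemma Lt (a g h z : R -> R) a' g' h' z' x w m t :
  is_derive a t a' -> is_derive g t g' -> is_derive h t h' -> is_derive z t z' ->
  is_derive (fun s => exp (a s * m^2 + g s) * (x-w)^2 + h s * m^2 + z s) t
   (exp (a t * m^2 + g t) * (a' * m^2 + g') * (x-w)^2 + h' * m^2 + z').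
Proof.
intros Ha Hg Hh Hz.
auto_derive.
- repeat split; eexists; eassumption.
- replace (Derive (fun x0 : R => a x0) t) with a' by (symmetry; apply is_derive_unique; exact Ha).
  replace (Derive (fun x0 : R => g x0) t) with g' by (symmetry; apply is_derive_unique; exact Hg).
  replace (Derive (fun x0 : R => h x0) t) with h' by (symmetry; apply is_derive_unique; exact Hh).
  replace (Derive (fun x0 : R => z x0) t) with z' by (symmetry; apply is_derive_unique; exact Hz).
  simpl; ring.
Qed.
Lemma Lx A G H Z w m y : Derive (fun z => exp (A*m^2+G)*(z-w)^2 + H*m^2+Z) y = exp (A*m^2+G)*(2*(y-w)).
Proof. apply is_derive_unique. auto_derive; auto. simpl; ring. Qed.
Lemma Lxx A G H Z w m x : Derive (fun y => Derive (fun z => exp (A*m^2+G)*(z-w)^2 + H*m^2+Z) y) x = 2*exp (A*m^2+G).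
Proof. rewrite (Derive_ext _ (fun y => exp (A*m^2+G)*(2*(y-w)))); [|intro; apply Lx].
apply is_derive_unique. auto_derive; auto. simpl; ring. Qed.
Lemma Lxm A G H Z w m x : Derive (fun n => Derive (fun z => exp (A*n^2+G)*(z-w)^2 + H*n^2+Z) x) m = 2*exp (A*m^2+G)*(2*A*m)*(x-w).
Proof. rewrite (Derive_ext _ (fun n => exp (A*n^2+G)*(2*(x-w)))); [|intro; apply Lx].
apply is_derive_unique. auto_derive; auto. simpl; ring. Qed.
Lemma Lmm A G H Z w m x : Derive (fun n => Derive (fun k => exp (A*k^2+G)*(x-w)^2 + H*k^2+Z) n) m = exp (A*m^2+G)*(2*A + 4*A^2*m^2)*(x-w)^2 + 2*H.
Proof. rewrite (Derive_ext _ (fun n => exp (A*n^2+G)*(2*A*n)*(x-w)^2 + 2*H*n)).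
2:{ intro n. apply is_derive_unique. auto_derive; auto. simpl; ring. }
apply is_derive_unique. auto_derive; auto. simpl; ring. Qed.
Lemma RInt_low (f : R -> R) lo hi a b :
  lo < a < hi -> lo < b < hi -> (forall s, lo < s < hi -> continuous f s) ->
  is_derive (fun x => RInt f x b) a (- f a).
Proof.
intros Ha Hb Hc.
apply (is_derive_RInt' f (fun x => RInt f x b) a b).
- assert (He : 0 < Rmin (a - lo) (hi - a)) by (apply Rmin_pos; lra).
  exists (mkposreal _ He). intros y Hy.
  refine (RInt_correct _ _ _ _). apply ex_RInt_continuous.
  intros z Hz. apply Hc.
  change (Rabs (y - a) < Rmin (a - lo) (hi - a)) in Hy.
  apply Rabs_def2 in Hy.
  pose proof (Rmin_l (a-lo) (hi-a)). pose proof (Rmin_r (a-lo) (hi-a)).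
  pose proof (Rmin_l y b). pose proof (Rmax_l y b).
  pose proof (Rmin_r y b). pose proof (Rmax_r y b).
  destruct (Rle_dec y b); [rewrite Rmin_left in Hz by lra; rewrite Rmax_right in Hz by lra
   | rewrite Rmin_right in Hz by lra; rewrite Rmax_left in Hz by lra]; lra.
- apply Hc; lra.
Qed.

Lemma alpha_der P0 T t : 0 < P0 -> 0 < 1 + P0 * t -> 0 < 1 + P0 * (2 * T - t) ->
  is_derive (alpha P0 T) t (1 + 4 * alpha P0 T t * Pt P0 t + 2 * (alpha P0 T t)^2 * (Pt P0 t)^2).
Proof.
intros H0 H1 H2. unfold alpha, Pt. auto_derive.
- lra.
- field. lra.
Qed.

Lemma gamma_der P0 T t : 0 < P0 -> 0 < T -> 0 < 1 + P0 * t -> 0 < 1 + P0 * (2 * T - t) ->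
  is_derive (gamma P0 T) t (- (Pt P0 t)^2 * alpha P0 T t).
Proof.
intros H0 HT H1 H2. assert (H3 : 0 < 1 + P0 * T) by nra.
unfold gamma, alpha, Pt. auto_derive.
- apply Rmult_lt_0_compat; [nra | apply Rinv_0_lt_compat; nra].
- field. repeat split; lra.
Qed.

Lemma Lt' (a g h z : R -> R) a' g' h' z' x w m t :
  is_derive a t a' -> is_derive g t g' -> is_derive h t h' -> is_derive z t z' ->
  Derive (fun s => exp (a s * m^2 + g s) * (x-w)^2 + h s * m^2 + z s) t =
   exp (a t * m^2 + g t) * (a' * m^2 + g') * (x-w)^2 + h' * m^2 + z'.
Proof. intros. apply is_derive_unique. apply Lt; auto. Qed.

Lemma dom P0 T s : 0 < P0 -> 0 < T -> - / P0 < s < 2 * T ->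
  0 < 1 + P0 * s /\ 0 < 1 + P0 * (2 * T - s).
Proof.
intros H0 HT [H1 H2]. assert (P0 * / P0 = 1) by (field; lra).
split; nra.
Qed.

Lemma alpha_cont P0 T s : 0 < P0 -> 0 < T -> - / P0 < s < 2 * T -> continuous (alpha P0 T) s.
Proof. intros H0 HT Hs. destruct (dom P0 T s H0 HT Hs).
apply (ex_derive_continuous (alpha P0 T)). eexists. apply alpha_der; auto. Qed.

Lemma eta_der P0 T tau s : 0 < P0 -> 0 < T -> - / P0 < s < 2 * T ->
  is_derive (eta P0 T tau) s (- (tau / 2 * alpha P0 T s)).
Proof.
intros H0 HT Hs. unfold eta.
replace (- (tau / 2 * alpha P0 T s)) with (tau / 2 * (- alpha P0 T s)) by ring.
apply (is_derive_scal (fun x => RInt (fun s0 => alpha P0 T s0) x T)).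
apply (RInt_low _ (- / P0) (2 * T)); auto.
- assert (0 < / P0) by (apply Rinv_0_lt_compat; lra). lra.
- intros; apply alpha_cont; auto.
Qed.

Lemma zint_cont P0 T sigma tau s : 0 < P0 -> 0 < T -> - / P0 < s < 2 * T ->
  continuous (fun s => tau / 2 * (ln (PI * tau / sigma ^ 2) - gamma P0 T s)
                   - (Pt P0 s) ^ 2 * eta P0 T tau s) s.
Proof.
intros H0 HT Hs. destruct (dom P0 T s H0 HT Hs).
apply (ex_derive_continuous (fun s => tau / 2 * (ln (PI * tau / sigma ^ 2) - gamma P0 T s)
                   - (Pt P0 s) ^ 2 * eta P0 T tau s)).
auto_derive. split; [|split; [|split; [|exact I]]].
- eexists; apply gamma_der; auto.
- unfold Pt. auto_derive. lra.
- eexists; apply eta_der; auto.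
Qed.

Lemma zeta_der P0 T sigma tau t : 0 < P0 -> 0 < T -> 0 <= t <= T ->
  is_derive (zeta P0 T sigma tau) t
   (tau / 2 * (ln (PI * tau / sigma ^ 2) - gamma P0 T t) - (Pt P0 t) ^ 2 * eta P0 T tau t).
Proof.
intros H0 HT Ht. unfold zeta.
assert (0 < / P0) by (apply Rinv_0_lt_compat; lra).
set (g := fun s => tau / 2 * (ln (PI * tau / sigma ^ 2) - gamma P0 T s)
                   - (Pt P0 s) ^ 2 * eta P0 T tau s).
replace (tau / 2 * (ln (PI * tau / sigma ^ 2) - gamma P0 T t) - (Pt P0 t) ^ 2 * eta P0 T tau t)
  with (- (- g t)) by (unfold g; ring).
apply (is_derive_opp (fun x => RInt g x T)).
apply (RInt_low _ (- / P0) (2 * T)); try lra.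
intros; apply zint_cont; auto.
Qed.

Theorem mainTheorem7 (P0 T sigma tau w : R) :
  0 < P0 -> 0 < T -> 0 < sigma -> 0 < tau ->
  let V := Vfun P0 T sigma tau w in
  (forall t x m, 0 <= t <= T ->
     let Vt  := Derive (fun s => V s x m) t in
     let Vx  := Derive (fun y => V t y m) x in
     let Vxx := Derive (fun y => Derive (fun z => V t z m) y) x in
     let Vmm := Derive (fun n => Derive (fun k => V t x k) n) m in
     let Vxm := Derive (fun n => Derive (fun y => V t y n) x) m in
     0 = Vt + (Pt P0 t) ^ 2 / 2 * Vmm
         - (m * Vx + Pt P0 t * Vxm) ^ 2 / (2 * Vxx)
         - tau / 2 * ln (2 * PI * tau / (sigma ^ 2 * Vxx))) /\
  (forall x m, V T x m = (x - w) ^ 2).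
Proof.
intros H0 HT Hs Hta V. split.
- intros t x m Ht. cbv zeta. unfold V, Vfun.
  assert (Hd : - / P0 < t < 2 * T).
  { assert (0 < / P0) by (apply Rinv_0_lt_compat; lra). lra. }
  destruct (dom P0 T t H0 HT Hd) as [Hu HD].
  rewrite Lxx, Lxm, Lmm, Lx.
  rewrite (Lt' (alpha P0 T) (gamma P0 T) (eta P0 T tau) (zeta P0 T sigma tau) _ _ _ _ x w m t
     (alpha_der P0 T t H0 Hu HD) (gamma_der P0 T t H0 HT Hu HD) (eta_der P0 T tau t H0 HT Hd)
     (zeta_der P0 T sigma tau t H0 HT Ht)).
  set (E := exp (alpha P0 T t * m ^ 2 + gamma P0 T t)).
  assert (HE : 0 < E) by apply exp_pos.
  replace (2 * PI * tau / (sigma ^ 2 * (2 * E))) with (PI * tau / sigma ^ 2 * / E)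
    by (field; split; lra).
  pose proof PI_RGT_0.
  rewrite ln_mult, ln_Rinv; [| lra | | apply Rinv_0_lt_compat; lra].
  2: { apply Rdiv_lt_0_compat; [nra | apply pow_lt; lra]. }
  unfold E in *; rewrite ln_exp.
  unfold Pt. field. repeat split; lra.
- intros x m. unfold V, Vfun, zeta, eta.
  rewrite !RInt_point. unfold alpha, gamma.
  assert (H3 : 0 < 1 + P0 * T) by nra.
  replace (2 * T - T) with T by ring.
  replace ((1 + P0 * T) * (1 + P0 * T) / (1 + P0 * T) ^ 2) with 1
    by (field; lra).
  rewrite ln_1. replace (T - T) with 0 by ring. simpl.
  replace (- ((1 + P0 * T) * 0) / (1 + P0 * T) * (m * (m * 1)) + / 2 * 0) with 0
    by (field; lra).
  rewrite exp_0. unfold zero; simpl. ring.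
Qed.
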